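(* Let $\mathcal{H}$ be a real Hilbert space, $f:\mathcal{H}\to\mathbb{R}$ $\mu$-strongly convex and $L$-smooth with $0<\mu<L<\infty$, $g:\mathcal{H}\to\mathbb{R}\cup\{+\infty\}$ convex, proper and lower semicontinuous, $q=\mu/L$, and $x^\star$ the unique minimizer of $f+g$. Let the Prox-TMM iterates $z^k$ and the quantities $\mathcal{V}_k^\infty$ be as defined in the context. Then for every $k\in\mathbb{N}$ (i.e. $k\ge1$), $$\mu\|z^{k+1}-x^\star\|^2\le(1-\sqrt q)^2\,\mathcal{V}_k^\infty.$$
   Context: $\operatorname{Prox}^{\gamma}_g(x)=\operatorname{argmin}_z\big(g(z)+\frac{1}{2\gamma}\|x-z\|^2\big)$. Prox-TMM from $x^0\in\mathcal{H}$: $z^0=x^0$, and for $k\ge0$: $y^k=\frac{2\sqrt q}{1+\sqrt q}z^k+\frac{1-\sqrt q}{1+\sqrt q}x^k$, $\bar z^{k+1}=(1-\sqrt q)z^k+\sqrt q\,y^k-\frac{1}{\sqrt qL}\nabla f(y^k)$, $z^{k+1}=\operatorname{Prox}^{1/(\sqrt qL)}_g(\bar z^{k+1})$, $x^{k+1}=y^k-\frac1L\nabla f(y^k)-\sqrt q(\bar z^{k+1}-z^{k+1})$. Define $\mathcal{I}_f(x,y)=f(x)-f(y)-\langle\nabla f(y),x-y\rangle-\frac{\mu}{2}\|x-y\|^2-\frac{1}{2(L-\mu)}\|\nabla f(x)-\nabla f(y)-\mu(x-y)\|^2$ and $\mathcal{I}_g(x,y,s)=g(x)-g(y)-\langle s,x-y\rangle$.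 For $k\ge1$ let $s_g^k=\sqrt qL(\bar z^k-z^k)$, let $s_g^\star=-\nabla f(x^\star)$, and $$\mathcal{V}_k^\infty=(1-q)\mathcal{I}_f(y^{k-1},x^\star)+q\,\mathcal{I}_g(x^\star,z^k,s_g^k)+\sqrt q(\sqrt q-1)\mathcal{I}_g(z^k,x^\star,s_g^\star)+\frac1{2L}\|s_g^k-s_g^\star\|^2+\mu\|z^k-x^\star\|^2.$$ *)

(* Defs.v *)
From HB Require Import structures.
From mathcomp Require Import all_boot all_order all_algebra.
From mathcomp Require Import reals constructive_ereal.
Set Implicit Arguments. Unset Strict Implicit. Unset Printing Implicit Defensive.
Import Order.TTheory GRing.Theory Num.Theory.
Local Open Scope ring_scope.
Local Open Scope ereal_scope.

Section Defs.
Context {R : realType} {H : lmodType R}.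
Local Open Scope ring_scope.

Definition is_inner_product (inner : H -> H -> R) : Prop :=
  (forall x y, inner x y = inner y x) /\
  (forall (a : R) x y w, inner (a *: x + y) w = a * inner x w + inner y w) /\
  (forall x, 0 <= inner x x) /\
  (forall x, inner x x = 0 -> x = 0).

Definition normH (inner : H -> H -> R) (x : H) : R := Num.sqrt (inner x x).

Definition complete_inner (inner : H -> H -> R) : Prop :=
  forall u : nat -> H,
    (forall e : R, 0 < e -> exists N, forall m n, (N <= m)%N -> (N <= n)%N ->
        normH inner (u m - u n) < e) ->
    exists l : H, forall e : R, 0 < e -> exists N, forall n, (N <= n)%N ->
        normH inner (u n - l) < e.

Definition is_hilbert (inner : H -> H -> R) : Prop :=
  is_inner_product inner /\ complete_inner inner.

Definition is_gradient (inner : H -> H -> R) (f : H -> R) (gf : H -> H) : Prop :=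
  forall x (e : R), 0 < e -> exists d : R, 0 < d /\
    forall h, normH inner h < d ->
      `|f (x + h) - f x - inner (gf x) h| <= e * normH inner h.

Definition strongly_convex (inner : H -> H -> R) (mu : R) (f : H -> R) : Prop :=
  forall x y (t : R), 0 <= t <= 1 ->
    f (t *: x + (1 - t) *: y) <=
      t * f x + (1 - t) * f y - mu / 2 * t * (1 - t) * normH inner (x - y) ^+ 2.

Definition L_smooth (inner : H -> H -> R) (L : R) (f : H -> R) (gf : H -> H) : Prop :=
  is_gradient inner f gf /\
  forall x y, normH inner (gf x - gf y) <= L * normH inner (x - y).

Definition ext_valued (g : H -> \bar R) : Prop := forall x : H, g x != -oo%E.

Definition convex_ext (g : H -> \bar R) : Prop :=
  forall (x y : H) (t : R), 0 <= t <= 1 ->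
    (g (t *: x + (1 - t) *: y)%R <= t%:E * g x + (1 - t)%:E * g y)%E.

Definition proper_fun (g : H -> \bar R) : Prop :=
  ext_valued g /\ exists x : H, g x != +oo%E.

Definition lsc (inner : H -> H -> R) (g : H -> \bar R) : Prop :=
  forall (x : H) (a : R), (a%:E < g x)%E -> exists d : R, 0 < d /\
    forall y : H, normH inner (y - x) < d -> (a%:E < g y)%E.

Definition is_prox (inner : H -> H -> R) (g : H -> \bar R) (gamma : R) (v z : H) : Prop :=
  forall w : H, (g z + (1 / (2 * gamma) * normH inner (v - z) ^+ 2)%:E <=
             g w + (1 / (2 * gamma) * normH inner (v - w) ^+ 2)%:E)%E.

Definition is_minimizer (f : H -> R) (g : H -> \bar R) (xs : H) : Prop :=
  forall w : H, ((f xs)%:E + g xs <= (f w)%:E + g w)%E.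

(** Prox-TMM iterates (zb k stands for \bar z^k; zb 0 is unused) *)
Definition prox_TMM (inner : H -> H -> R) (mu L : R) (gf : H -> H) (g : H -> \bar R)
    (x y z zb : nat -> H) : Prop :=
  let q := mu / L in let sq := Num.sqrt q in
  z 0%N = x 0%N /\
  forall k : nat,
    y k = (2 * sq / (1 + sq)) *: z k + ((1 - sq) / (1 + sq)) *: x k /\
    zb k.+1 = (1 - sq) *: z k + sq *: y k - (1 / (sq * L)) *: gf (y k) /\
    is_prox inner g (1 / (sq * L)) (zb k.+1) (z k.+1) /\
    x k.+1 = y k - (1 / L) *: gf (y k) - sq *: (zb k.+1 - z k.+1).

Definition I_f (inner : H -> H -> R) (mu L : R) (f : H -> R) (gf : H -> H) (u v : H) : R :=
  f u - f v - inner (gf v) (u - v) - mu / 2 * normH inner (u - v) ^+ 2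
  - 1 / (2 * (L - mu)) * normH inner (gf u - gf v - mu *: (u - v)) ^+ 2.

Definition I_g (inner : H -> H -> R) (g : H -> \bar R) (u v s : H) : \bar R :=
  (g u - g v - (inner s (u - v))%:E)%E.

(** Lyapunov quantity V_k^infty (meaningful for k >= 1) *)
Definition V_inf (inner : H -> H -> R) (mu L : R) (f : H -> R) (gf : H -> H)
    (g : H -> \bar R) (y z zb : nat -> H) (xs : H) (k : nat) : \bar R :=
  let q := mu / L in let sq := Num.sqrt q in
  let sgk := (sq * L) *: (zb k - z k) in
  let sgs := - gf xs in
  ((1 - q)%:E * (I_f inner mu L f gf (y k.-1) xs)%:E
   + q%:E * I_g inner g xs (z k) sgk
   + (sq * (sq - 1))%:E * I_g inner g (z k) xs sgs
   + (1 / (2 * L) * normH inner (sgk - sgs) ^+ 2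
      + mu * normH inner (z k - xs) ^+ 2)%:E)%E.

End Defs.

(* Main.v *)
Require Import Defs.
From HB Require Import structures.
From mathcomp Require Import all_boot all_order all_algebra.
From mathcomp Require Import reals constructive_ereal.
From mathcomp Require Import ring lra.
Import Order.TTheory GRing.Theory Num.Theory.
Local Open Scope ring_scope.

Section Main.
Variables (R : realType) (H : lmodType R) (inner : H -> H -> R).
Hypothesis isym : forall x y, inner x y = inner y x.
Hypothesis ilin : forall (a : R) x y w, inner (a *: x + y) w = a * inner x w + inner y w.
Hypothesis ipos : forall x, 0 <= inner x x.
Hypothesis idef : forall x, inner x x = 0 -> x = 0.

Lemma inner0l w : inner 0 w = 0.
Proof. have := ilin 1 0 0 w. rewrite scaler0 addr0 mul1r => h. have : inner 0 w + inner 0 w - inner 0 w = inner 0 w - inner 0 w by rewrite -h. by rewrite addrK subrr. Qed.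
Lemma inner_addl x y w : inner (x + y) w = inner x w + inner y w.
Proof. by rewrite -[x]scale1r ilin mul1r scale1r. Qed.
Lemma inner_scalel a x w : inner (a *: x) w = a * inner x w.
Proof. by rewrite -[a *: x]addr0 ilin inner0l addr0. Qed.
Lemma inner_oppl x w : inner (- x) w = - inner x w.
Proof. by rewrite -scaleN1r inner_scalel mulN1r. Qed.
Lemma inner_subl x y w : inner (x - y) w = inner x w - inner y w.
Proof. by rewrite inner_addl inner_oppl. Qed.
Lemma inner_addr x y w : inner w (x + y) = inner w x + inner w y.
Proof. by rewrite isym inner_addl !(isym w). Qed.
Lemma inner_scaler a x w : inner w (a *: x) = a * inner w x.
Proof. by rewrite isym inner_scalel isym. Qed.
Lemma inner_oppr x w : inner w (- x) = - inner w x.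
Proof. by rewrite isym inner_oppl isym. Qed.
Lemma inner_subr x y w : inner w (x - y) = inner w x - inner w y.
Proof. by rewrite inner_addr inner_oppr. Qed.

Ltac iexp := rewrite ?(inner_addl, inner_addr, inner_subl, inner_subr, inner_scalel, inner_scaler, inner_oppl, inner_oppr).


Lemma inner0r w : inner w 0 = 0.
Proof. by rewrite isym inner0l. Qed.

Local Notation nH := (normH inner).
Lemma nH_ge0 x : 0 <= nH x. Proof. exact: sqrtr_ge0. Qed.
Lemma nH_sq x : nH x ^+ 2 = inner x x. Proof. by rewrite /normH sqr_sqrtr. Qed.
Lemma nH_scale t x : 0 <= t -> nH (t *: x) = t * nH x.
Proof.
move=> t0. rewrite /normH inner_scalel inner_scaler mulrA -expr2 sqrtrM ?sqrtr_sqr ?ger0_norm //.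
exact: sqr_ge0.
Qed.
Lemma nH0 {x} : nH x = 0 -> x = 0.
Proof. move=> h; apply: idef; by rewrite -nH_sq h expr2 mulr0. Qed.

Lemma CS a b : inner a b <= nH a * nH b.
Proof.
have [ha|ha] := eqVneq (nH a) 0; first by rewrite ha mul0r (nH0 ha) inner0l.
have [hb|hb] := eqVneq (nH b) 0; first by rewrite hb mulr0 (nH0 hb) inner0r.
have pa : 0 < nH a by rewrite lt0r ha nH_ge0.
have pb : 0 < nH b by rewrite lt0r hb nH_ge0.
have := ipos (nH b *: a - nH a *: b).
rewrite inner_subl !inner_subr !inner_scalel !inner_scaler -!nH_sq (isym b a).
move: (nH a) (nH b) (inner a b) pa pb => A B I pa pb h.
have hAB : 0 < A * B by exact: mulr_gt0.
have : 0 <= (2 * (A * B)) * (A * B - I).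
  have -> : 2 * (A * B) * (A * B - I) = B * (B * A ^+ 2) - B * (A * I) - (A * (B * I) - A * (A * B ^+ 2)) by ring.
  exact: h.
rewrite pmulr_rge0 ?subr_ge0 //. by rewrite mulr_gt0.
Qed.

Lemma eps_ge0 (X K : R) : 0 <= K -> (forall e, 0 < e -> e <= 1 -> - (e * K) <= X) -> 0 <= X.
Proof.
move=> hK h. rewrite leNgt; apply/negP => hX.
have hd : 0 < 2 * (K + 1) - X by lra.
have he : 0 < - X / (2 * (K + 1) - X) by rewrite divr_gt0 // oppr_gt0.
have he1 : - X / (2 * (K + 1) - X) <= 1 by rewrite ler_pdivrMr // mul1r; lra.
have := h _ he he1.
have -> : - (- X / (2 * (K + 1) - X) * K) = (X * K) / (2 * (K + 1) - X) by ring.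
rewrite ler_pdivrMr // => h2.
nra.
Qed.

Lemma arch_le (X K : R) : (forall n : nat, (0 < n)%N -> n%:R * X <= K) -> X <= 0.
Proof.
move=> h. rewrite leNgt; apply/negP => hX.
have hK : 0 <= K by have := h 1%N isT; rewrite mul1r => h1; lra.
have hb := archi_boundP (divr_ge0 hK (ltW hX)).
set n := Num.Def.archi_bound (K / X) in hb.
have := h n.+1 isT.
rewrite -natr1.
have : K < n%:R * X by rewrite -ltr_pdivrMr.
move=> h1 h2. nra.
Qed.

Lemma dir_grad {f gf} : is_gradient inner f gf -> forall x d e, 0 < e ->
  exists t, [/\ 0 < t, t <= 1, t <= e &
     `|f (x + t *: d) - f x - t * inner (gf x) d| <= e * (t * nH d)].
Proof.
move=> hg x d e he. have [del [hdel hh]] := hg x e he.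
set m := Num.min del e.
have hm : 0 < m by rewrite lt_min hdel he.
have hmd : m <= del by rewrite ge_min lexx.
have hme : m <= e by rewrite ge_min lexx orbT.
have hnd := nH_ge0 d.
have hden : 0 < m + nH d + 1 by lra.
set t := m / (m + nH d + 1).
have ht0 : 0 < t by rewrite divr_gt0.
have htm : t <= m by rewrite ler_pdivrMr //; nra.
have ht1 : t <= 1 by rewrite ler_pdivrMr //; lra.
have htd : t * nH d < del.
  apply: (lt_le_trans _ hmd). rewrite /t mulrAC ltr_pdivrMr //. nra.
exists t; split => //; first exact: le_trans htm hme.
have := hh (t *: d). rewrite nH_scale; last exact: ltW. rewrite inner_scaler. by apply.
Qed.

Lemma vcomb (t : R) (u v : H) : t *: u + (1 - t) *: v = v + t *: (u - v).
Proof. by rewrite scalerBl scale1r scalerBr addrCA. Qed.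

Lemma sc_first mu f gf : 0 <= mu -> strongly_convex inner mu f -> is_gradient inner f gf ->
  forall u v, f v + inner (gf v) (u - v) + mu / 2 * nH (u - v) ^+ 2 <= f u.
Proof.
move=> hmu hsc hg u v.
have hnd := nH_ge0 (u - v).
rewrite -subr_ge0.
apply: (@eps_ge0 _ (nH (u - v) + mu / 2 * nH (u - v) ^+ 2)).
  by apply: addr_ge0 => //; apply: mulr_ge0; [apply: divr_ge0|apply: sqr_ge0].
move=> e he he1.
have [t [ht0 ht1 hte habs]] := dir_grad hg v (u - v) _ he.
have := hsc u v t. rewrite ltW // ht1 vcomb => /(_ isT) hs.
move: habs; rewrite ler_norml => /andP[ha _].
move: hs ha.
move: (f (v + t *: (u - v))) (f u) (f v) (inner (gf v) (u - v)) (nH (u - v)) hnd => A fu fv G n hn hs ha.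
have h1 : 0 <= t * (fu - (fv + G + mu / 2 * n ^+ 2) + mu / 2 * t * n ^+ 2 + e * n).
  have -> : t * (fu - (fv + G + mu / 2 * n ^+ 2) + mu / 2 * t * n ^+ 2 + e * n)
     = (t * fu + (1 - t) * fv - mu / 2 * t * (1 - t) * n ^+ 2) - fv - t * G + e * (t * n) by ring.
  lra.
rewrite pmulr_rge0 // in h1.
have h2 : mu / 2 * t * n ^+ 2 <= mu / 2 * e * n ^+ 2.
  apply: ler_wpM2r; first exact: sqr_ge0. apply: ler_wpM2l => //. exact: divr_ge0.
lra.
Qed.

Lemma vdiff (u d : H) (a b : R) : (u + a *: d) - (u + b *: d) = (a - b) *: d.
Proof. by rewrite opprD addrACA subrr add0r scalerBl. Qed.
Lemma vdiff0 (u d : H) (b : R) : (u + b *: d) - u = b *: d.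
Proof. by rewrite addrC addKr. Qed.

Lemma desc L f gf : 0 <= L -> (forall x y, nH (gf x - gf y) <= L * nH (x - y)) ->
  (forall u v, f v + inner (gf v) (u - v) <= f u) ->
  forall u w, f w <= f u + inner (gf u) (w - u) + L / 2 * nH (w - u) ^+ 2.
Proof.
move=> hL hlip hcv u w.
have hnd := nH_ge0 (w - u).
set d := w - u in hnd *. set nd := nH d in hnd *. set g0 := inner (gf u) d.
have step : forall n : nat, (0 < n)%N -> forall m : nat,
   n%:R ^+ 2 * (f (u + (m%:R / n%:R) *: d) - f u) - m%:R * n%:R * g0
     <= L * nd ^+ 2 * (m%:R * (m%:R + 1) / 2).
  move=> n hn. have hN : 0 < n%:R :> R by rewrite ltr0n.
  have hn0 : n%:R != 0 :> R by rewrite pnatr_eq0 -lt0n.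
  elim=> [|m IH].
    by rewrite !mul0r scale0r addr0 subrr mulr0 subr0 mulr0.
  have hb : 0 <= m.+1%:R / n%:R :> R by rewrite divr_ge0 // ler0n.
  have hc := hcv (u + (m%:R / n%:R) *: d) (u + (m.+1%:R / n%:R) *: d).
  rewrite vdiff inner_scaler in hc.
  have hab : m%:R / n%:R - m.+1%:R / n%:R = - (1 / n%:R) :> R.
    by rewrite -[m.+1]addn1 natrD; field.
  rewrite hab in hc.
  move: hc IH.
  set x1 := u + (m.+1%:R / n%:R) *: d. set x0 := u + (m%:R / n%:R) *: d.
  move=> hc IH.
  have hJ : inner (gf x1 - gf u) d <= L * (m.+1%:R / n%:R) * nd * nd.
    apply: le_trans (CS _ _) _.
    have := hlip x1 u. rewrite /x1 vdiff0 nH_scale // => hl.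
    apply: le_trans (ler_wpM2r hnd hl) _. by rewrite !mulrA.
  have hI : inner (gf x1) d = g0 + inner (gf x1 - gf u) d by rewrite inner_subl /g0; ring.
  have h1 : n%:R * (f x1 - f x0) <= inner (gf x1) d.
    rewrite mulrC -ler_pdivlMr //. move: hc. set I1 := inner (gf x1) d. move=> hc.
    have -> : I1 / n%:R = 1 / n%:R * I1 by rewrite mulrC mul1r.
    lra.
  have h2 := ler_wpM2l (ltW hN) h1.
  have h3 := ler_wpM2l (ltW hN) hJ.
  have eb : n%:R * (L * (m.+1%:R / n%:R) * nd * nd) = L * (m%:R + 1) * nd ^+ 2.
    by rewrite -[m.+1]addn1 natrD; field.
  rewrite eb in h3. rewrite -natr1.
  move: h2 h3 hI IH.
  move: (f x1) (f x0) (f u) (inner (gf x1) d) (inner (gf x1 - gf u) d) => A B C I J.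
  move=> h2 h3 hI IH. rewrite hI in h2. nra.
rewrite -subr_le0.
apply: (@arch_le _ (L * nd ^+ 2 / 2)) => n hn.
have hN : 0 < n%:R :> R by rewrite ltr0n.
have hn0 : n%:R != 0 :> R by rewrite pnatr_eq0 -lt0n.
have := step n hn n. rewrite divff //.
have -> : u + 1 *: d = w by rewrite scale1r /d addrC subrK.
move=> h.
rewrite -(ler_pM2l hN).
clear step. move: h. move: (f w) (f u) g0 nd hnd => A B G M hM h. nra.
Qed.

Lemma interp mu L f gf : mu < L ->
  (forall u v, f v + inner (gf v) (u - v) + mu / 2 * nH (u - v) ^+ 2 <= f u) ->
  (forall u w, f w <= f u + inner (gf u) (w - u) + L / 2 * nH (w - u) ^+ 2) ->
  forall u v, 0 <= I_f inner mu L f gf u v.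
Proof.
move=> hmL h1 h2 u v.
have hL0 : L - mu != 0 by rewrite subr_eq0 gt_eqF.
set D := gf u - gf v - mu *: (u - v).
set w := u - (1 / (L - mu)) *: D.
have A := h1 w v. have B := h2 u w.
rewrite /I_f -/D. rewrite !nH_sq in A B *.
have E : f u - f v - inner (gf v) (u - v) - mu / 2 * inner (u - v) (u - v) - 1 / (2 * (L - mu)) * inner D D
   = (f u + inner (gf u) (w - u) + L / 2 * inner (w - u) (w - u) - f w)
     + (f w - (f v + inner (gf v) (w - v) + mu / 2 * inner (w - v) (w - v))).
  rewrite /w /D. iexp.
  rewrite ?(isym v u) ?(isym (gf u) u) ?(isym (gf v) u) ?(isym (gf u) v) ?(isym (gf v) v) ?(isym (gf v) (gf u)).
  by field.
rewrite E. apply: addr_ge0; by rewrite subr_ge0.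
Qed.

Lemma gsub_min f gf (g : H -> \bar R) xs Gx : is_gradient inner f gf -> convex_ext g ->
  is_minimizer f g xs -> g xs = Gx%:E ->
  forall w Gw, g w = Gw%:E -> 0 <= Gw - Gx - inner (- gf xs) (w - xs).
Proof.
move=> hg hcv hmin hx w Gw hw.
have hnd := nH_ge0 (w - xs).
apply: (@eps_ge0 _ (nH (w - xs))) => // e he he1.
have [t [ht0 ht1 hte habs]] := dir_grad hg xs (w - xs) _ he.
have hc := hcv w xs t. rewrite ltW // ht1 vcomb hw hx in hc. have hc' := hc isT.
rewrite -EFinM -EFinM -EFinD in hc'.
have hm := hmin (xs + t *: (w - xs)).
rewrite hx in hm.
have : ((f xs)%:E + Gx%:E <= (f (xs + t *: (w - xs)))%:E + (t * Gw + (1 - t) * Gx)%:E)%E.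
  apply: le_trans hm _. exact: leeD2l.
rewrite -!EFinD lee_fin => hr.
move: habs; rewrite ler_norml => /andP[_ hb].
rewrite inner_oppl.
move: hr hb. move: (f xs) (f (xs + t *: (w - xs))) (inner (gf xs) (w - xs)) (nH (w - xs)) hnd => A B G M hM hr hb.
have h1 : 0 <= t * (Gw - Gx + G + e * M) by lra.
rewrite pmulr_rge0 // in h1. lra.
Qed.

Lemma nsq_sub (a b : H) t : inner (a - t *: b) (a - t *: b) = inner a a - 2 * t * inner a b + t ^+ 2 * inner b b.
Proof. iexp. rewrite (isym b a). ring. Qed.

Lemma gsub_prox (g : H -> \bar R) gam v z Gz : 0 < gam -> convex_ext g ->
  is_prox inner g gam v z -> g z = Gz%:E ->
  forall w Gw, g w = Gw%:E -> 0 <= Gw - Gz - inner ((1 / gam) *: (v - z)) (w - z).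
Proof.
move=> hgam hcv hp hz w Gw hw.
have hc0 : 0 <= 1 / (2 * gam) by rewrite divr_ge0 // mulr_ge0 // ltW.
apply: (@eps_ge0 _ (1 / (2 * gam) * inner (w - z) (w - z))).
  exact: mulr_ge0.
move=> e he he1.
have hc := hcv w z e. rewrite ltW // he1 vcomb hw hz in hc. have hc' := hc isT.
rewrite -EFinM -EFinM -EFinD in hc'.
have hpp := hp (z + e *: (w - z)).
rewrite hz in hpp.
have : (Gz%:E + (1 / (2 * gam) * nH (v - z) ^+ 2)%:E <= (e * Gw + (1 - e) * Gz)%:E
          + (1 / (2 * gam) * nH (v - (z + e *: (w - z))) ^+ 2)%:E)%E.
  apply: le_trans hpp _. exact: leeD2r.
rewrite -!EFinD lee_fin !nH_sq => hr.
have ev : v - (z + e *: (w - z)) = (v - z) - e *: (w - z) by rewrite opprD addrA.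
rewrite ev nsq_sub in hr.
rewrite inner_scalel.
have hc2 : 1 / gam = 2 * (1 / (2 * gam)) by field; rewrite gt_eqF.
rewrite hc2.
move: hr. move: (1 / (2 * gam)) hc0 (inner (v - z) (v - z)) (inner (v - z) (w - z)) (inner (w - z) (w - z)) => c hc0' P Q S hr.
have h1 : 0 <= e * (Gw - Gz - 2 * c * Q + e * (c * S)) by lra.
rewrite pmulr_rge0 // in h1. lra.
Qed.

Lemma fin_min f (g : H -> \bar R) xs : proper_fun g -> is_minimizer f g xs -> exists Gx, g xs = Gx%:E.
Proof.
move=> [hev [x0 hx0]] hmin.
have h0 := hev x0.
case E0: (g x0) hx0 h0 => [r| |] // _ _.
move: (hmin x0) (hev xs). rewrite E0.
case Ex: (g xs) => [r'| |] //. by exists r'.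
Qed.

Lemma fin_prox (g : H -> \bar R) gam v z : proper_fun g -> is_prox inner g gam v z -> exists Gz, g z = Gz%:E.
Proof.
move=> [hev [x0 hx0]] hp.
have h0 := hev x0.
case E0: (g x0) hx0 h0 => [r| |] // _ _.
move: (hp x0) (hev z). rewrite E0.
case Ex: (g z) => [r'| |] //. by exists r'.
Qed.

Definition N v := inner v v.
Definition Ifr (mu L : R) (u v gu gv : H) (Fu Fv : R) :=
  Fu - Fv - inner gv (u - v) - mu / 2 * N (u - v) - 1 / (2 * (L - mu)) * N (gu - gv - mu *: (u - v)).
Definition Igr (u v sv : H) (Gu Gv : R) := Gu - Gv - inner sv (u - v).

Section Key.
Variables (xs zk y0 G0 zbk G1 Gs z1 : H).
Definition ev (i : nat) : H := match i with
  | 0%N => xs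
  | 1%N => zk
  | 2%N => y0
  | 3%N => G0
  | 4%N => zbk
  | 5%N => G1
  | 6%N => Gs
  | _ => z1 end.
Definition lc (a : nat -> R) : H := \sum_(i < 8) a i *: ev i.
Lemma inner_lc a b : inner (lc a) (lc b) = a 0%N * b 0%N * inner xs xs + a 0%N * b 1%N * inner xs zk + a 0%N * b 2%N * inner xs y0 + a 0%N * b 3%N * inner xs G0 + a 0%N * b 4%N * inner xs zbk + a 0%N * b 5%N * inner xs G1 + a 0%N * b 6%N * inner xs Gs + a 0%N * b 7%N * inner xs z1 + a 1%N * b 0%N * inner zk xs + a 1%N * b 1%N * inner zk zk + a 1%N * b 2%N * inner zk y0 + a 1%N * b 3%N * inner zk G0 + a 1%N * b 4%N * inner zk zbk + a 1%N * b 5%N * inner zk G1 + a 1%N * b 6%N * inner zk Gs + a 1%N * b 7%N * inner zk z1 + a 2%N * b 0%N * inner y0 xs + a 2%N * b 1%N * inner y0 zk + a 2%N * b 2%N * inner y0 y0 + a 2%N * b 3%N * inner y0 G0 + a 2%N * b 4%N * inner y0 zbk + a 2%N * b 5%N * inner y0 G1 + a 2%N * b 6%N * inner y0 Gs + a 2%N * b 7%N * inner y0 z1 + a 3%N * b 0%N * inner G0 xs + a 3%N * b 1%N * inner G0 zk + a 3%N * b 2%N * inner G0 y0 + a 3%N * b 3%N * inner G0 G0 + a 3%N * b 4%N * inner G0 zbk + a 3%N * b 5%N * inner G0 G1 + a 3%N * b 6%N * inner G0 Gs + a 3%N * b 7%N * inner G0 z1 + a 4%N * b 0%N * inner zbk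 xs + a 4%N * b 1%N * inner zbk zk + a 4%N * b 2%N * inner zbk y0 + a 4%N * b 3%N * inner zbk G0 + a 4%N * b 4%N * inner zbk zbk + a 4%N * b 5%N * inner zbk G1 + a 4%N * b 6%N * inner zbk Gs + a 4%N * b 7%N * inner zbk z1 + a 5%N * b 0%N * inner G1 xs + a 5%N * b 1%N * inner G1 zk + a 5%N * b 2%N * inner G1 y0 + a 5%N * b 3%N * inner G1 G0 + a 5%N * b 4%N * inner G1 zbk + a 5%N * b 5%N * inner G1 G1 + a 5%N * b 6%N * inner G1 Gs + a 5%N * b 7%N * inner G1 z1 + a 6%N * b 0%N * inner Gs xs + a 6%N * b 1%N * inner Gs zk + a 6%N * b 2%N * inner Gs y0 + a 6%N * b 3%N * inner Gs G0 + a 6%N * b 4%N * inner Gs zbk + a 6%N * b 5%N * inner Gs G1 + a 6%N * b 6%N * inner Gs Gs + a 6%N * b 7%N * inner Gs z1 + a 7%N * b 0%N * inner z1 xs + a 7%N * b 1%N * inner z1 zk + a 7%N * b 2%N * inner z1 y0 + a 7%N * b 3%N * inner z1 G0 + a 7%N * b 4%N * inner z1 zbk + a 7%N * b 5%N * inner z1 G1 + a 7%N * b 6%N * inner z1 Gs + a 7%N * b 7%N * inner z1 z1.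
Proof. rewrite /lc !big_ord_recr !big_ord0 /= !add0r. iexp. ring. Qed.
Definition u (k : nat) : nat -> R := fun i => if i == k then 1 else 0.
Definition cadd (a b : nat -> R) : nat -> R := fun i => a i + b i.
Definition cscale (t : R) (a : nat -> R) : nat -> R := fun i => t * a i.
Definition copp (a : nat -> R) : nat -> R := fun i => - a i.
Lemma lc_add a b : lc a + lc b = lc (cadd a b).
Proof. rewrite /lc -big_split /=; apply: eq_bigr => i _; by rewrite scalerDl. Qed.
Lemma lc_scale t a : t *: lc a = lc (cscale t a).
Proof. rewrite /lc scaler_sumr; apply: eq_bigr => i _; by rewrite scalerA. Qed.
Lemma lc_opp a : - lc a = lc (copp a).
Proof. rewrite /lc -sumrN; apply: eq_bigr => i _; by rewrite scaleNr. Qed.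
Lemma E0 : xs = lc (u 0). Proof. rewrite /lc !big_ord_recr big_ord0 /= add0r /u /= !scale0r ?add0r ?addr0 scale1r //. Qed.
Lemma E1 : zk = lc (u 1). Proof. rewrite /lc !big_ord_recr big_ord0 /= add0r /u /= !scale0r ?add0r ?addr0 scale1r //. Qed.
Lemma E2 : y0 = lc (u 2). Proof. rewrite /lc !big_ord_recr big_ord0 /= add0r /u /= !scale0r ?add0r ?addr0 scale1r //. Qed.
Lemma E3 : G0 = lc (u 3). Proof. rewrite /lc !big_ord_recr big_ord0 /= add0r /u /= !scale0r ?add0r ?addr0 scale1r //. Qed.
Lemma E4 : zbk = lc (u 4). Proof. rewrite /lc !big_ord_recr big_ord0 /= add0r /u /= !scale0r ?add0r ?addr0 scale1r //. Qed.
Lemma E5 : G1 = lc (u 5). Proof. rewrite /lc !big_ord_recr big_ord0 /= add0r /u /= !scale0r ?add0r ?addr0 scale1r //. Qed.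
Lemma E6 : Gs = lc (u 6). Proof. rewrite /lc !big_ord_recr big_ord0 /= add0r /u /= !scale0r ?add0r ?addr0 scale1r //. Qed.
Lemma E7 : z1 = lc (u 7). Proof. rewrite /lc !big_ord_recr big_ord0 /= add0r /u /= !scale0r ?add0r ?addr0 scale1r //. Qed.

Lemma key (sg L mu : R) (F0 Fs F1 Gx Gz Gn : R) :
  L != 0 -> sg != 0 -> 1 + sg != 0 -> L - sg^+2 * L != 0 -> mu = sg ^+ 2 * L ->
  let q := mu / L in let rho := 1 - sg in
  let sgk := (sg * L) *: (zbk - zk) in
  let xk := y0 - (1 / L) *: G0 - sg *: (zbk - zk) in
  let yk := (2 * sg / (1 + sg)) *: zk + ((1 - sg) / (1 + sg)) *: xk in
  let zb1 := (1 - sg) *: zk + sg *: yk - (1 / (sg * L)) *: G1 in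
  let s1 := (sg * L) *: (zb1 - z1) in
  let ss := - Gs in
  let Vr := (1 - q) * Ifr mu L y0 xs G0 Gs F0 Fs + q * Igr xs zk sgk Gx Gz
     + (sg * (sg - 1)) * Igr zk xs ss Gz Gx + (1 / (2 * L) * N (sgk - ss) + mu * N (zk - xs)) in
  rho ^+ 2 * Vr - mu * N (z1 - xs) =
    rho ^+ 2 * (1 - q) * Ifr mu L y0 yk G0 G1 F0 F1
  + (1 - q) * sg * (2 - sg) * Ifr mu L xs yk Gs G1 Fs F1
  + (1 - q) * Ifr mu L yk xs G1 Gs F1 Fs
  + sg * rho ^+ 2 * Igr z1 zk sgk Gn Gz
  + (2 * sg - sg * rho ^+ 2) * Igr z1 xs ss Gn Gx
  + 2 * sg * Igr xs z1 s1 Gx Gn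
  + 1 / L * (rho ^+ 2 / 2 * N (sgk - s1) + (1 - rho ^+ 2 / 2) * N (s1 - ss)).
Proof.
move=> hL hs h1s hLm hmu q rho sgk xk yk zb1 s1 ss Vr.
rewrite /Vr /Ifr /Igr /N /q /rho /sgk /s1 /zb1 /yk /xk /ss hmu.
rewrite E0 E1 E2 E3 E4 E5 E6 E7.
rewrite !(lc_opp, lc_scale, lc_add).
rewrite !inner_lc /u /cadd /cscale /copp /=.
rewrite ?(isym zk xs) ?(isym y0 xs) ?(isym G0 xs) ?(isym zbk xs) ?(isym G1 xs) ?(isym Gs xs) ?(isym z1 xs) ?(isym y0 zk) ?(isym G0 zk) ?(isym zbk zk) ?(isym G1 zk) ?(isym Gs zk) ?(isym z1 zk) ?(isym G0 y0) ?(isym zbk y0) ?(isym G1 y0) ?(isym Gs y0) ?(isym z1 y0) ?(isym zbk G0) ?(isym G1 G0) ?(isym Gs G0) ?(isym z1 G0) ?(isym G1 zbk) ?(isym Gs zbk) ?(isym z1 zbk) ?(isym Gs G1) ?(isym z1 G1) ?(isym z1 Gs).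
field.
by rewrite hL hs h1s hLm.
Qed.
End Key.

Lemma IfrE mu L f gf u v : Ifr mu L u v (gf u) (gf v) (f u) (f v) = I_f inner mu L f gf u v.
Proof. by rewrite /Ifr /I_f /N !nH_sq. Qed.
Lemma N_nH v : N v = nH v ^+ 2.
Proof. by rewrite /N nH_sq. Qed.

Lemma main_sec mu L f gf (g : H -> \bar R) x y z zb xs :
  0 < mu -> mu < L -> strongly_convex inner mu f -> L_smooth inner L f gf ->
  convex_ext g -> proper_fun g -> is_minimizer f g xs ->
  prox_TMM inner mu L gf g x y z zb ->
  forall k, (1 <= k)%N -> ((mu * nH (z k.+1 - xs) ^+ 2)%:E
      <= ((1 - Num.sqrt (mu / L)) ^+ 2)%:E * V_inf inner mu L f gf g y z zb xs k)%E.
Proof.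
move=> hmu hmL hsc [hg hlip] hcv hpr hmin [hz0 htmm] k hk.
have hL : 0 < L by exact: lt_trans hmu hmL.
have hF1 := sc_first _ _ _ (ltW hmu) hsc hg.
have hcv0 : forall u v, f v + inner (gf v) (u - v) <= f u.
  move=> u v. apply: le_trans (hF1 u v). rewrite lerDl. apply: mulr_ge0; last exact: sqr_ge0.
  by rewrite divr_ge0 // ltW.
have hF2 := desc _ _ _ (ltW hL) hlip hcv0.
have hIf := interp _ _ _ _ hmL hF1 hF2.
case: k hk => [//|k'] _.
have hq0 : 0 < mu / L by rewrite divr_gt0.
have hq1 : mu / L < 1 by rewrite ltr_pdivrMr // mul1r.
have hsg2 : Num.sqrt (mu / L) ^+ 2 = mu / L by rewrite sqr_sqrtr // ltW.
have hsg0 : 0 < Num.sqrt (mu / L) by rewrite sqrtr_gt0.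
have [ey1 [ezb1 [hp1 ex1]]] := htmm k'.
have [ey2 [ezb2 [hp2 ex2]]] := htmm k'.+1.
move: ey1 ezb1 hp1 ex1 ey2 ezb2 hp2 ex2 hsg2 hsg0.
set sg := Num.sqrt (mu / L).
move=> ey1 ezb1 hp1 ex1 ey2 ezb2 hp2 ex2 hsg2 hsg0.
have hsg1 : sg < 1 by nra.
have hmu' : mu = sg ^+ 2 * L by rewrite hsg2 mulrAC -mulrA divff ?mulr1 // gt_eqF.
have [Gx hGx] := fin_min _ _ _ hpr hmin.
have [Gz hGz] := fin_prox _ _ _ _ hpr hp1.
have [Gn hGn] := fin_prox _ _ _ _ hpr hp2.
have hgam : 0 < 1 / (sg * L) by rewrite divr_gt0 // mulr_gt0.
have hinv : 1 / (1 / (sg * L)) = sg * L by rewrite !div1r invrK.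
have B1 := gsub_prox _ _ _ _ _ hgam hcv hp1 hGz _ _ hGn. rewrite hinv in B1.
have B2 := gsub_min _ _ _ _ _ hg hcv hmin hGx _ _ hGn.
have B3 := gsub_prox _ _ _ _ _ hgam hcv hp2 hGn _ _ hGx. rewrite hinv in B3.
have A1 := hIf (y k') (y k'.+1).
have A2 := hIf xs (y k'.+1).
have A3 := hIf (y k'.+1) xs.
rewrite /V_inf /I_g /= -/sg hGx hGz.
do 8 rewrite -?EFinN -?EFinB -?EFinM -?EFinD.
rewrite lee_fin.
have hL0 : L != 0 by rewrite gt_eqF.
have hs0 : sg != 0 by rewrite gt_eqF.
have h1s : 1 + sg != 0 by rewrite gt_eqF // addr_gt0.
have hLm : L - sg ^+ 2 * L != 0 by rewrite -hmu' subr_eq0 gt_eqF.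
have E := key xs (z k'.+1) (y k') (gf (y k')) (zb k'.+1) (gf (y k'.+1)) (gf xs) (z k'.+2) sg L mu
   (f (y k')) (f xs) (f (y k'.+1)) Gx Gz Gn hL0 hs0 h1s hLm hmu'.
rewrite /= -ex1 -ey2 -ezb2 in E.
rewrite !IfrE !N_nH /Igr in E.
rewrite -subr_ge0 E.
have hq' : 0 <= 1 - mu / L by rewrite subr_ge0 ltW.
have hr2 : (1 - sg) ^+ 2 < 1 by nra.
have c1 : 0 <= (1 - sg) ^+ 2 * (1 - mu / L) := mulr_ge0 (sqr_ge0 _) hq'.
have c2 : 0 <= (1 - mu / L) * sg * (2 - sg).
  apply: mulr_ge0; [apply: mulr_ge0 => //; exact: ltW | lra].
have c4 : 0 <= sg * (1 - sg) ^+ 2 by apply: mulr_ge0; [exact: ltW | exact: sqr_ge0].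
have c5 : 0 <= 2 * sg - sg * (1 - sg) ^+ 2 by nra.
have c6 : 0 <= 2 * sg by nra.
have c7 : 0 <= 1 / L * ((1 - sg) ^+ 2 / 2 *
     nH ((sg * L) *: (zb k'.+1 - z k'.+1) - (sg * L) *: (zb k'.+2 - z k'.+2)) ^+ 2 +
     (1 - (1 - sg) ^+ 2 / 2) * nH ((sg * L) *: (zb k'.+2 - z k'.+2) - - gf xs) ^+ 2).
  apply: mulr_ge0; first by rewrite divr_ge0 // ltW.
  apply: addr_ge0; apply: mulr_ge0; try exact: sqr_ge0.
    apply: divr_ge0 => //; exact: sqr_ge0.
  have : 0 <= (1 - sg) ^+ 2 by exact: sqr_ge0.
  lra.
apply: addr_ge0; last exact: c7.
apply: addr_ge0; last exact: mulr_ge0 c6 B3.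
apply: addr_ge0; last exact: mulr_ge0 c5 B2.
apply: addr_ge0; last exact: mulr_ge0 c4 B1.
apply: addr_ge0; last exact: mulr_ge0 hq' A3.
apply: addr_ge0; [exact: mulr_ge0 c1 A1 | exact: mulr_ge0 c2 A2].
Qed.

End Main.

Theorem lemma6 (R : realType) (H : lmodType R) (inner : H -> H -> R)
  (mu L : R) (f : H -> R) (gf : H -> H) (g : H -> \bar R)
  (x y z zb : nat -> H) (xs : H) :
  is_hilbert inner ->
  0 < mu -> mu < L ->
  strongly_convex inner mu f ->
  L_smooth inner L f gf ->
  convex_ext g -> proper_fun g -> lsc inner g ->
  is_minimizer f g xs ->
  prox_TMM inner mu L gf g x y z zb ->
  forall k : nat, (1 <= k)%N ->
    ((mu * normH inner (z k.+1 - xs) ^+ 2)%:E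
      <= ((1 - Num.sqrt (mu / L)) ^+ 2)%:E * V_inf inner mu L f gf g y z zb xs k)%E.
Proof.
move=> [[isym [ilin [ipos idef]]] _] hmu hmL hsc hsm hcv hpr _ hmin htmm k hk.
exact: (@main_sec R H inner isym ilin ipos idef mu L f gf g x y z zb xs hmu hmL hsc hsm hcv hpr hmin htmm k hk).
Qed.
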